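(* Let $\Pi$ be a $3$-decomposable $30$-half-period with classes $A,B,C$. Then $N_k^{bi}(\Pi)=3k$ for $k=1,2,\dots,10$.
   Context: An allowable sequence on an $n$-element set is a doubly infinite sequence of permutations of the set (lists on positions $1,\dots,n$) in which consecutive permutations differ by swapping two adjacent elements (a transposition) and $\pi_{i+\binom n2}$ is the reverse of $\pi_i$; an $n$-half-period is a block $(\pi_0,\dots,\pi_{\binom n2})$ of consecutive permutations (each pair of elements is swapped exactly once in it). A transposition swapping the elements in positions $i,i+1$ is an $i$-transposition; for $1\le k\le n/2$ it is $k$-critical if it is a $k$-transposition or an $(n-k)$-transposition. An $n$-half-period $\Pi$ ($3\mid n$) is $3$-decomposable if its elements can be labeled $A=\{a_1,\dots,a_{n/3}\}$, $B=\{b_1,\dots,b_{n/3}\}$, $C=\{c_1,\dots,c_{n/3}\}$ so that its first permutation is $(a_{n/3},\dots,a_1,b_1,\dots,b_{n/3},c_1,\dots,c_{n/3})$, every transposition between an element of $A$ and an element of $B$ occurs before every transposition between an element of $C$ and an element of $A\cup B$, and every transposition between $A$ and $C$ occurs before every transposition between $B$ and $C$. A transposition is bichromatic if its two elements lie in different classes among $A,B,C$, and monochromatic otherwise. $N_k^{bi}(\Pi)$ is the number of bichromatic $k$-critical transpositions of $\Pi$. *)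

(* Defs.v *)
From mathcomp Require Import all_boot all_order all_algebra all_fingroup.
Set Implicit Arguments. Unset Strict Implicit. Unset Printing Implicit Defensive.
Import GRing.Theory Num.Theory.

(* Elements of the n-element set: 'I_n.  Positions: 'I_n, 0-based
   (position j here is position j+1 in the paper).
   A permutation (list) is p : {perm 'I_n}, p j = element at position j. *)

Definition adj_swap n (p q : {perm 'I_n}) (j j' : 'I_n) : bool :=
  (val j' == (val j).+1) && [forall x, q x == p (tperm j j' x)].

Definition allowable n (S : int -> {perm 'I_n}) : Prop :=
  (forall i : int, exists j j' : 'I_n, adj_swap (S i) (S (i + 1)%R) j j') /\
  (forall (i : int) (x : 'I_n), S (i + ('C(n, 2))%:Z)%R x = S i (rev_ord x)).

(* n-half-period: the block (pi_0, ..., pi_(C(n,2))), represented by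
   P : nat -> {perm 'I_n} (only t <= C(n,2) is relevant). *)
Definition half_period n (P : nat -> {perm 'I_n}) : Prop :=
  exists (S : int -> {perm 'I_n}) (i0 : int), allowable S /\
    forall t, t <= 'C(n, 2) -> P t = S (i0 + t%:Z)%R.

Definition swaps_at n (P : nat -> {perm 'I_n}) (t : nat) (j j' x y : 'I_n) :=
  adj_swap (P t) (P t.+1) j j' &&
  (((P t j == x) && (P t j' == y)) || ((P t j == y) && (P t j' == x))).

Definition swaps n (P : nat -> {perm 'I_n}) (t : nat) (x y : 'I_n) : bool :=
  [exists j, exists j', swaps_at P t j j' x y].

Definition three_decomposable n (P : nat -> {perm 'I_n})
    (A B C : {set 'I_n}) : Prop :=
  let m := n %/ 3 in
  3 %| n /\
  exists a b c : 'I_m -> 'I_n,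
    A = [set a i | i in 'I_m] /\ B = [set b i | i in 'I_m] /\
    C = [set c i | i in 'I_m] /\
    (* first permutation (a_m, ..., a_1, b_1, ..., b_m, c_1, ..., c_m);
       labels are 0-based here: a i = a_(i+1) *)
    (forall (i : 'I_m) (pos : 'I_n),
        (val pos = m - 1 - i -> P 0 pos = a i) /\
        (val pos = m + i -> P 0 pos = b i) /\
        (val pos = 2 * m + i -> P 0 pos = c i)) /\
    (forall t1 t2 x y u v, t1 < 'C(n, 2) -> t2 < 'C(n, 2) ->
        swaps P t1 x y -> x \in A -> y \in B ->
        swaps P t2 u v -> u \in C -> v \in A :|: B -> t1 < t2) /\
    (forall t1 t2 x y u v, t1 < 'C(n, 2) -> t2 < 'C(n, 2) ->
        swaps P t1 x y -> x \in A -> y \in C ->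
        swaps P t2 u v -> u \in B -> v \in C -> t1 < t2).

Definition same_class n (A B C : {set 'I_n}) (x y : 'I_n) : bool :=
  [|| (x \in A) && (y \in A), (x \in B) && (y \in B) | (x \in C) && (y \in C)].

(* N_k^bi: number of bichromatic k-critical transpositions (k- or
   (n-k)-transpositions, i.e. swapping positions i,i+1 (1-based) with
   i = k or i = n-k; 0-based: val j' = i). *)
Definition N_bi n (P : nat -> {perm 'I_n}) (A B C : {set 'I_n}) (k : nat) : nat :=
  count (fun t => [exists j, exists j', exists x, exists y,
            [&& swaps_at P t j j' x y,
                (val j' == k) || (val j' == n - k) &
                ~~ same_class A B C x y]])
        (iota 0 'C(n, 2)).

(* Main.v *)
Require Import Defs.
From mathcomp Require Import all_boot all_order all_algebra all_fingroup.
From mathcomp Require Import zify.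
Set Implicit Arguments. Unset Strict Implicit. Unset Printing Implicit Defensive.

Lemma N_val : 'C(30, 2) = 435. Proof. by rewrite bin2. Qed.

Lemma card_lt_pairs : #|[set uv : 'I_30 * 'I_30 | uv.1 < uv.2]| = 435.
Proof.
rewrite -sum1_card big_mkcond /=.
rewrite (eq_bigr (fun i => (fun u v : 'I_30 => if u < v then 1 else 0) i.1 i.2)); last by case=> u v _; rewrite inE.
rewrite -(pair_bigA _ (fun u v : 'I_30 => if u < v then 1 else 0)) /=.
rewrite (eq_bigr (fun u : 'I_30 => \sum_(0 <= v < 30) if u < v then 1 else 0)); last by move=> u _; rewrite -(big_mkord xpredT (fun v => if u < v then 1 else 0)).
rewrite -(big_mkord xpredT (fun u => \sum_(0 <= v < 30) if u < v then 1 else 0)).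
by rewrite unlock.
Qed.

Lemma pigeon m n (f : 'I_m -> nat) : injective f -> (forall i, f i < n) -> m <= n.
Proof.
move=> fi fb.
pose g (i : 'I_m) : 'I_n := Ordinal (fb i).
have gi : injective g by move=> i1 i2 /(congr1 val) /= /fi.
by have := leq_card g gi; rewrite !card_ord.
Qed.

Lemma val_tperm n (j j' p : 'I_n) :
  val (tperm j j' p) = if p == j then val j' else if p == j' then val j else val p.
Proof.
case: tpermP => [->|->|/eqP a /eqP b]; rewrite ?eqxx //.
- by case: eqP => // ->.
- by rewrite (negPf a) (negPf b).
Qed.

Lemma adj_unique n (p q : {perm 'I_n}) j j' j0 j0' :
  adj_swap p q j j' -> adj_swap p q j0 j0' -> j0 = j /\ j0' = j'.
Proof.
move=> /andP[/eqP e1 /forallP H1] /andP[/eqP e2 /forallP H2].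
have E : forall z, tperm j j' z = tperm j0 j0' z.
  by move=> z; apply: (@perm_inj _ p); rewrite -(eqP (H1 z)) (eqP (H2 z)).
have := congr1 val (E j); rewrite tpermL val_tperm.
case: eqP => [->|n1]; first by move/val_inj.
case: eqP => [ej|n2]; first by move: ej => /(congr1 val) ej' H; exfalso; move: ej' H e1 e2; clear; simpl; lia.
move=> H; exfalso; move: H e1 e2; clear; simpl; lia.
Qed.

Lemma tperm_adj_lt n (j j' p q : 'I_n) : val j' = (val j).+1 -> p != q ->
  (tperm j j' p < tperm j j' q) =
  (if (p == j) && (q == j') then false else if (p == j') && (q == j) then true else p < q).
Proof.
move=> e pq; rewrite !val_tperm.
have vE : forall a b : 'I_n, (a == b) = (nat_of_ord a == nat_of_ord b) by [].
move: pq; rewrite !vE /=.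
have e' : nat_of_ord j' = (nat_of_ord j).+1 := e.
move: (nat_of_ord p) (nat_of_ord q) (nat_of_ord j) (nat_of_ord j') e' => P Q J J' E.
case: (P =P J) => a; case: (Q =P J') => b;
case: (P =P J') => c; case: (Q =P J) => d => /= H; apply/idP/idP; lia.
Qed.

Lemma arith_core : forall k hx hy J' J, 1 <= k <= 10 -> J' = J.+1 -> 
  forall cnt0 cnt1 cnt2 cnt3 cnt4 cnt5 : nat,
  J' < 30 ->
  hy < 30 ->
  cnt2 + (J' == k) && (hx < 10) = cnt3 + (J' == k) && (hy < 10) ->
  cnt0 + (J' == k) && (19 < hx) = cnt1 + (J' == k) && (19 < hy) ->
  cnt4 + (J' == 30 - k) && (hx < 10) = cnt5 + (J' == 30 - k) && (hy < 10) ->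
  (hx < 10 -> 19 < hy -> 9 < J) ->
  (hx < 10 -> 9 < hy < 20 -> J' < 20) ->
  (9 < hx < 20 -> 19 < hy -> J' < 20) ->
  hx < hy ->
  ((J' == k) || (J' == 30 - k)) &&
  ~~
  [|| (hx < 10) && (hy < 10), [&& 9 < hx < 20, 9 < hy & hy < 20]
    | (19 < hx) && (19 < hy)] +
  cnt2 + cnt1 + cnt4 = cnt3 + cnt0 + cnt5.
Proof.
move=> k hx hy J' J hk E cnt0 cnt1 cnt2 cnt3 cnt4 cnt5 H1 H2 c1 c2 c3 l1 l2 l3 d.
case: (J' =P k) => a; case: (J' =P 30 - k) => b /= in c1 c2 c3 *; rewrite ?add0n ?addn0 in c1 c2 c3 *.
- by exfalso; lia.
- case: (ltnP hx 10) => p1 /= in c1 c2 c3 l1 l2 l3 *; case: (ltnP hy 10) => p2 /= in c1 c2 c3 l1 l2 l3 *;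
  case: (ltnP hx 20) => p3 /= in c1 c2 c3 l1 l2 l3 *; case: (ltnP hy 20) => p4 /= in c1 c2 c3 l1 l2 l3 *;
  rewrite ?andbT ?andbF /= in c1 c2 c3 l1 l2 l3 *; first [ by exfalso; lia | lia].
- case: (ltnP hx 10) => p1 /= in c1 c2 c3 l1 l2 l3 *; case: (ltnP hy 10) => p2 /= in c1 c2 c3 l1 l2 l3 *;
  case: (ltnP hx 20) => p3 /= in c1 c2 c3 l1 l2 l3 *; case: (ltnP hy 20) => p4 /= in c1 c2 c3 l1 l2 l3 *;
  rewrite ?andbT ?andbF /= in c1 c2 c3 l1 l2 l3 *; first [ by exfalso; lia | lia].
- lia.
Qed.

Lemma sumvals1 k : 1 <= k <= 10 ->
  [/\ \sum_(0 <= p < 30) ((p < k) && (p < 10)) = k,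
      \sum_(0 <= p < 30) ((p < k) && (20 <= p)) = 0 &
      \sum_(0 <= p < 30) ((p < 30 - k) && (p < 10)) = 10].
Proof.
case/andP; case: k => // k _.
do 10 (case: k => [|k]; first by rewrite unlock).
by [].
Qed.
Lemma sumvals2 k : 1 <= k <= 10 ->
  [/\ \sum_(0 <= p < 30) ((p < k) && (29 - p < 10)) = 0,
      \sum_(0 <= p < 30) ((p < k) && (20 <= 29 - p)) = k &
      \sum_(0 <= p < 30) ((p < 30 - k) && (29 - p < 10)) = 10 - k].
Proof.
case/andP; case: k => // k _.
do 10 (case: k => [|k]; first by rewrite unlock).
by [].
Qed.
Section Main.
Variable P : nat -> {perm 'I_30}.
Hypothesis stepP : forall t, t < 'C(30, 2) -> exists j j', adj_swap (P t) (P t.+1) j j'.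
Hypothesis finalP : forall x, P 'C(30, 2) x = P 0 (rev_ord x).

Definition pos t (z : 'I_30) : 'I_30 := ((P t)^-1)%g z.
Definition h z : nat := pos 0 z.

Lemma posK t p : pos t (P t p) = p.
Proof. by rewrite /pos permK. Qed.
Lemma Kpos t z : P t (pos t z) = z.
Proof. by rewrite /pos permKV. Qed.
Lemma pos_inj t : injective (pos t).
Proof. by move=> a b /(congr1 (P t)); rewrite !Kpos. Qed.
Lemma h_inj : injective h.
Proof. by move=> a b /val_inj /pos_inj. Qed.
Lemma h_lt z : h z < 30.
Proof. exact: ltn_ord. Qed.
Lemma hP0 p : h (P 0 p) = p.
Proof. by rewrite /h posK. Qed.

Lemma pos_step t j j' : adj_swap (P t) (P t.+1) j j' ->
  forall z, pos t.+1 z = tperm j j' (pos t z).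
Proof.
move=> /andP[_ /forallP H] z; apply: (@perm_inj _ (P t.+1)).
by rewrite Kpos (eqP (H _)) tpermK Kpos.
Qed.

Lemma pos_final z : nat_of_ord (pos 'C(30, 2) z) = 29 - h z.
Proof.
have -> : pos 'C(30, 2) z = rev_ord (pos 0 z).
  by apply: (@perm_inj _ (P 'C(30,2))); rewrite Kpos finalP rev_ordK Kpos.
by rewrite /= /h.
Qed.

Lemma hP_final p : h (P 'C(30, 2) p) = 29 - p.
Proof.
by rewrite finalP hP0 /=.
Qed.

Lemma swaps_sym t u v : swaps P t u v = swaps P t v u.
Proof.
apply/existsP/existsP => -[j /existsP[j' /andP[a b]]]; exists j; apply/existsP; exists j';
  rewrite /swaps_at a /=; by rewrite orbC.
Qed.

Lemma swaps_which t j j' u v : adj_swap (P t) (P t.+1) j j' -> swaps P t u v ->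
  (u = P t j /\ v = P t j') \/ (u = P t j' /\ v = P t j).
Proof.
move=> ad /existsP[j0 /existsP[j0' /andP[ad0 H]]].
have [e1 e2] := adj_unique ad ad0; subst j0 j0'.
by case/orP: H => /andP[/eqP <- /eqP <-]; [left|right].
Qed.

Lemma swaps_here t j j' : adj_swap (P t) (P t.+1) j j' -> swaps P t (P t j) (P t j').
Proof.
move=> ad; apply/existsP; exists j; apply/existsP; exists j'.
by rewrite /swaps_at ad !eqxx.
Qed.

Definition V t := [set uv : 'I_30 * 'I_30 | (h uv.1 < h uv.2) && (pos t uv.2 < pos t uv.1)].

Lemma V0 : #|V 0| = 0.
Proof.
apply/eqP; rewrite cards_eq0; apply/eqP/setP => -[u v]; rewrite !inE /=.
by apply/negP => /andP[a b]; rewrite /h in a; lia.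
Qed.

Lemma VN : #|V 'C(30, 2)| = 'C(30, 2).
Proof.
rewrite [RHS]N_val -card_lt_pairs.
have -> : V 'C(30, 2) = (fun uv => (pos 0 uv.1, pos 0 uv.2)) @^-1: [set uv : 'I_30 * 'I_30 | uv.1 < uv.2].
  apply/setP => -[u v]; rewrite !inE /= !pos_final.
  have := h_lt u; have := h_lt v; rewrite /h; move=> a b.
  by apply/idP/idP; lia.
apply: card_preimset => -[u v] [u' v'] /= [/pos_inj -> /pos_inj ->].
done.
Qed.
Lemma V_step t j j' : adj_swap (P t) (P t.+1) j j' ->
  #|V t.+1| + ((P t j', P t j) \in V t) <= #|V t| + 1.
Proof.
move=> ad; have e : nat_of_ord j' = (nat_of_ord j).+1 by case/andP: ad => /eqP.
have sub : V t.+1 \subset (P t j, P t j') |: (V t :\ (P t j', P t j)).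
  apply/subsetP => -[u v]; rewrite !inE /= !(pos_step ad).
  case/andP => huv.
  have nuv : pos t v != pos t u.
    by apply/eqP => /pos_inj E; move: huv; rewrite E ltnn.
  rewrite tperm_adj_lt //.
  case: ifP => // c1.
  case: ifP => [/andP[/eqP E1 /eqP E2] _|_ lt].
    by rewrite -E1 -E2 !Kpos eqxx.
  rewrite huv lt !andbT; apply/orP; right.
  apply/eqP => -[E1 E2]; subst u v.
  by move: c1; rewrite !posK !eqxx.
rewrite (cardsD1 (P t j', P t j) (V t)).
case bad: ((P t j', P t j) \in V t); last first.
  have := subset_leq_card sub; rewrite cardsU1 /=.
  move: (#|V t.+1|) (#|V t :\ (P t j', P t j)|) (_ \in _ :\ _) => a c [] /=; lia.
have sub2 : V t.+1 \subset V t :\ (P t j', P t j).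
  apply/subsetP => z zV; have := subsetP sub z zV; rewrite !inE.
  case/orP => [/eqP E|/andP[-> ->] //]; subst z.
  move: bad zV; rewrite !inE /=; lia.
have := subset_leq_card sub2.
by move: (#|V t.+1|) (#|V t :\ (P t j', P t j)|) => a c /=; lia.
Qed.

Lemma grow T d : T + d <= 'C(30, 2) -> #|V (T + d)| <= #|V T| + d.
Proof.
elim: d => [|d IH] Hd; first by rewrite !addn0.
have Hd' : T + d < 'C(30, 2) by lia.
have [j [j' ad]] := stepP Hd'.
rewrite -[T + d.+1]addSnnS addSn; have := V_step ad; have := IH (ltnW Hd'); move: (_ \in _) => b; lia.
Qed.

Lemma direction t j j' : t < 'C(30, 2) -> adj_swap (P t) (P t.+1) j j' ->
  h (P t j) < h (P t j').
Proof.
move=> tN ad; have e : nat_of_ord j' = (nat_of_ord j).+1 by case/andP: ad => /eqP.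
rewrite ltnNge leq_eqVlt negb_or; apply/andP; split.
  apply/eqP => /h_inj /perm_inj E; move: e; rewrite E; lia.
apply/negP => lt.
have inV : (P t j', P t j) \in V t by rewrite inE /= !posK lt /=; lia.
have := V_step ad; rewrite inV.
have := grow (T := 0) (d := t) (ltnW tN); rewrite V0 add0n.
have := grow (T := t.+1) (d := 'C(30,2) - t.+1); rewrite subnKC // VN => /(_ (leqnn _)).
rewrite N_val in tN *; lia.
Qed.

Lemma inv_iff t u v : t <= 'C(30, 2) -> h u < h v ->
  (pos t v < pos t u) <-> exists2 s, s < t & swaps P s u v.
Proof.
move=> + huv; elim: t => [_|t IH tN].
  split; last by case.
  by rewrite /h in huv; lia.
have tN' : t < 'C(30, 2) by [].
have [j [j' ad]] := stepP tN'.
have e : nat_of_ord j' = (nat_of_ord j).+1 by case/andP: ad => /eqP.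
have dir := direction tN' ad.
have nuv : pos t v != pos t u by apply/eqP => /pos_inj E; move: huv; rewrite E ltnn.
rewrite !(pos_step ad) tperm_adj_lt //.
case: ifP => [/andP[/eqP E1 /eqP E2]|c1].
  have Ev : v = P t j by rewrite -E1 Kpos.
  have Eu : u = P t j' by rewrite -E2 Kpos.
  by subst u v; lia.
case: ifP => [/andP[/eqP E1 /eqP E2]|c2].
  have Ev : v = P t j' by rewrite -E1 Kpos.
  have Eu : u = P t j by rewrite -E2 Kpos.
  split=> // _; exists t => //; subst u v; exact: swaps_here.
rewrite IH ?(ltnW tN) //; split=> -[s st sw]; exists s => //; first by apply: ltnW.
move: st; rewrite ltnS leq_eqVlt => /orP[/eqP Es|//]; subst s.
case: (swaps_which ad sw) => -[Eu Ev]; subst u v.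
  by move: c2; rewrite !posK !eqxx.
by move: c1; rewrite !posK !eqxx.
Qed.

Definition zel (o : nat) (i : 'I_10) : 'I_30 := P 0 (inord (o + i)).

Lemma h_zel o i : o <= 20 -> h (zel o i) = o + i.
Proof. move=> ho; rewrite /zel hP0 inordK //; have := ltn_ord i; lia. Qed.

Lemma zel_inj t o : o <= 20 -> injective (fun i => nat_of_ord (pos t (zel o i))).
Proof.
move=> ho i1 i2 /val_inj /pos_inj E.
have := congr1 h E; rewrite !h_zel // => /eqP; rewrite eqn_add2l => /eqP; exact: val_inj.
Qed.

Lemma left_pigeon t o (p : nat) : o <= 20 -> (forall i, pos t (zel o i) < p) -> 10 <= p.
Proof.
move=> ho H; have := @pigeon 10 p (fun i => nat_of_ord (pos t (zel o i))) (@zel_inj t o ho).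
by apply.
Qed.

Lemma right_pigeon t o (p : nat) : o <= 20 -> (forall i, p < pos t (zel o i)) -> p < 20.
Proof.
move=> ho H.
have inj : injective (fun i => pos t (zel o i) - p.+1).
  move=> i1 i2 /= E; apply: (@zel_inj t o ho) => /=.
  have := H i1; have := H i2; lia.
have := pigeon (n := 30 - p.+1) inj.
have B : forall i, pos t (zel o i) - p.+1 < 30 - p.+1.
  by move=> i; have := H i; have := ltn_ord (pos t (zel o i)); lia.
by move/(_ B); lia.
Qed.

Hypothesis ordAB : forall t1 t2 x y u v, t1 < 'C(30, 2) -> t2 < 'C(30, 2) ->
  swaps P t1 x y -> h x < 10 -> 10 <= h y < 20 ->
  swaps P t2 u v -> 20 <= h u -> h v < 20 -> t1 < t2.
Hypothesis ordAC : forall t1 t2 x y u v, t1 < 'C(30, 2) -> t2 < 'C(30, 2) ->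
  swaps P t1 x y -> h x < 10 -> 20 <= h y ->
  swaps P t2 u v -> 10 <= h u < 20 -> 20 <= h v -> t1 < t2.

Lemma loc_AC t j j' : t < 'C(30, 2) -> adj_swap (P t) (P t.+1) j j' ->
  h (P t j) < 10 -> 20 <= h (P t j') -> 10 <= j.
Proof.
move=> tN ad hx hy; apply: (@left_pigeon t 10) => // i.
have hz := @h_zel 10 i isT.
have lt1 : h (P t j) < h (zel 10 i) by lia.
have [s sN sw] : exists2 s, s < 'C(30, 2) & swaps P s (P t j) (zel 10 i).
  by apply/(inv_iff (leqnn _) lt1); rewrite !pos_final; have := h_lt (zel 10 i); lia.
have st : s < t.
  apply: (ordAB sN tN sw hx _ (u := P t j') (v := P t j)) => //.
  - by have := ltn_ord i; lia.
  - by rewrite swaps_sym; exact: swaps_here.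
  - by lia.
have := (inv_iff (ltnW tN) lt1).2 (ex_intro2 _ _ s st sw).
by rewrite posK.
Qed.

Lemma loc_AB t j j' : t < 'C(30, 2) -> adj_swap (P t) (P t.+1) j j' ->
  h (P t j) < 10 -> 10 <= h (P t j') < 20 -> j' < 20.
Proof.
move=> tN ad hx hy; apply: (@right_pigeon t 20) => // i.
have hz := @h_zel 20 i isT.
have lt1 : h (P t j') < h (zel 20 i) by lia.
have nz : pos t (zel 20 i) != pos t (P t j').
  by apply/eqP => /pos_inj E; move: lt1; rewrite E ltnn.
rewrite -{1}(posK t j'); move: nz; rewrite neq_ltn => /orP[lt|//].
have [s st sw] := (inv_iff (ltnW tN) lt1).1 lt.
have sN : s < 'C(30, 2) by apply: ltn_trans st tN.
have := ordAB tN sN (swaps_here ad) hx hy (u := zel 20 i) (v := P t j').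
rewrite swaps_sym => /(_ sw); lia.
Qed.

Lemma loc_BC t j j' : t < 'C(30, 2) -> adj_swap (P t) (P t.+1) j j' ->
  10 <= h (P t j) < 20 -> 20 <= h (P t j') -> j' < 20.
Proof.
move=> tN ad hx hy; apply: (@right_pigeon t 0) => // i.
have hz := @h_zel 0 i isT.
have lt1 : h (zel 0 i) < h (P t j') by have := ltn_ord i; lia.
have [s sN sw] : exists2 s, s < 'C(30, 2) & swaps P s (zel 0 i) (P t j').
  by apply/(inv_iff (leqnn _) lt1); rewrite !pos_final; have := h_lt (P t j'); lia.
have st : s < t.
  apply: (ordAC sN tN sw _ hy (swaps_here ad) hx) => //; have := ltn_ord i; lia.
have := (inv_iff (ltnW tN) lt1).2 (ex_intro2 _ _ s st sw).
by rewrite posK.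
Qed.

Definition cnt t m (X : pred nat) : nat := \sum_(p < 30) ((p < m) && X (h (P t p))).

Lemma cnt_step t j j' m (X : pred nat) : adj_swap (P t) (P t.+1) j j' ->
  cnt t.+1 m X + ((nat_of_ord j' == m) && X (h (P t j))) =
  cnt t m X + ((nat_of_ord j' == m) && X (h (P t j'))).
Proof.
move=> ad; have e : nat_of_ord j' = (nat_of_ord j).+1 by case/andP: ad => /eqP.
have Q : forall p, P t.+1 p = P t (tperm j j' p) by case/andP: ad => _ /forallP H p; apply/eqP.
have jj : j' != j by apply/eqP => E; move: e; rewrite E; lia.
rewrite /cnt (bigD1 j) // (bigD1 j') //= [in RHS](bigD1 j) // [in RHS](bigD1 j') //=.
rewrite !Q tpermL tpermR.
have -> : \sum_(i < 30 | (i != j) && (i != j')) ((i < m) && X (h (P t.+1 i))) =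
          \sum_(i < 30 | (i != j) && (i != j')) ((i < m) && X (h (P t i))).
  by apply: eq_bigr => p /andP[a b]; rewrite Q tpermD // eq_sym.
move: (\sum_(i < 30 | _) _) => R.
have jm : (j < m) = (j' <= m) by rewrite e.
rewrite jm; move: (X (h (P t j))) (X (h (P t j'))) => a b.
by case: (ltngtP j' m); case: a; case: b => //= _; lia.
Qed.

Definition sc (x y : 'I_30) : bool :=
  [|| (h x < 10) && (h y < 10), (10 <= h x < 20) && (10 <= h y < 20) | (20 <= h x) && (20 <= h y)].

Definition bich k t : bool := [exists j, exists j', exists x, exists y,
  [&& swaps_at P t j j' x y, (val j' == k) || (val j' == 30 - k) & ~~ sc x y]].

Lemma bich_eq k t j j' : adj_swap (P t) (P t.+1) j j' ->
  bich k t = ((nat_of_ord j' == k) || (nat_of_ord j' == 30 - k)) && ~~ sc (P t j) (P t j').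
Proof.
move=> ad; apply/existsP/idP.
  move=> [j0 /existsP[j0' /existsP[x /existsP[y /and3P[sw H1 H2]]]]].
  case/andP: (sw) => ad0 xy; have [E1 E2] := adj_unique ad ad0; subst j0 j0'.
  rewrite H1 /=; case/orP: xy => /andP[/eqP -> /eqP ->] //.
  by move: H2; rewrite /sc; lia.
move=> /andP[H1 H2]; exists j; apply/existsP; exists j'; apply/existsP; exists (P t j);
apply/existsP; exists (P t j'); by rewrite /swaps_at ad !eqxx H1 H2.
Qed.

Definition XA : pred nat := fun v => v < 10.
Definition XC : pred nat := fun v => 20 <= v.

Lemma step_id k t : 1 <= k <= 10 -> t < 'C(30, 2) ->
  bich k t + cnt t.+1 k XA + cnt t k XC + cnt t.+1 (30 - k) XA =
  cnt t k XA + cnt t.+1 k XC + cnt t (30 - k) XA.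
Proof.
move=> hk tN; have [j [j' ad]] := stepP tN.
have e : nat_of_ord j' = (nat_of_ord j).+1 by case/andP: ad => /eqP.
have dir := direction tN ad.
have l1 := loc_AC tN ad.
have l2 := loc_AB tN ad.
have l3 := loc_BC tN ad.
have c1 := cnt_step k XA ad.
have c2 := cnt_step k XC ad.
have c3 := cnt_step (30 - k) XA ad.
rewrite (bich_eq k ad).
move: c1 c2 c3 l1 l2 l3 dir; rewrite /XA /XC /sc.
have := h_lt (P t j'); have := ltn_ord j'.
move: (cnt t.+1 k _) (cnt t k _) (cnt t.+1 k _) (cnt t k _) (cnt t.+1 (30 - k) _) (cnt t (30 - k) _).
move: (h (P t j)) (h (P t j')) (nat_of_ord j') (nat_of_ord j) e => hx hy J' J E.
exact: arith_core.
Qed.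

Lemma cnt0E m X : cnt 0 m X = \sum_(0 <= p < 30) ((p < m) && X p).
Proof.
rewrite /cnt (eq_bigr (fun p : 'I_30 => nat_of_bool ((p < m) && X p))); last by move=> p _; rewrite hP0.
by rewrite -(big_mkord xpredT (fun p => nat_of_bool ((p < m) && X p))).
Qed.

Lemma cntNE m X : cnt 'C(30, 2) m X = \sum_(0 <= p < 30) ((p < m) && X (29 - p)).
Proof.
rewrite /cnt (eq_bigr (fun p : 'I_30 => nat_of_bool ((p < m) && X (29 - p)))); last by move=> p _; rewrite hP_final.
by rewrite -(big_mkord xpredT (fun p => nat_of_bool ((p < m) && X (29 - p)))).
Qed.

Lemma tele k T : 1 <= k <= 10 -> T <= 'C(30, 2) ->
  count (bich k) (iota 0 T) + cnt T k XA + cnt 0 k XC + cnt T (30 - k) XA =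
  cnt 0 k XA + cnt T k XC + cnt 0 (30 - k) XA.
Proof.
move=> hk; elim: T => [_|T IH TN]; first by rewrite /=; lia.
have := step_id hk TN; have := IH (ltnW TN).
have -> : iota 0 T.+1 = iota 0 T ++ [:: T] by rewrite -addn1 iotaD.
rewrite count_cat /= addn0.
lia.
Qed.

Lemma main_count k : 1 <= k <= 10 -> count (bich k) (iota 0 'C(30, 2)) = 3 * k.
Proof.
move=> hk; have := tele hk (leqnn _).
rewrite !cnt0E !cntNE /XA /XC.
have [-> -> ->] := sumvals1 hk; have [-> -> ->] := sumvals2 hk.
lia.
Qed.
End Main.

Import GRing.Theory.

Theorem corollary1 (P : nat -> {perm 'I_30}) (A B C : {set 'I_30}) :
  half_period P -> three_decomposable P A B C ->
  forall k : nat, 1 <= k <= 10 -> N_bi P A B C k = 3 * k.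
Proof.
move=> [S [i0 [[stepS revS] PS]]] [_ [a [b [c [EA [EB [EC [Hpos [H1 H2]]]]]]]]] k hk.
have P0 : P 0 = S i0 by rewrite PS // GRing.addr0.
have stepP : forall t, (t < 'C(30, 2)) -> exists j j', adj_swap (P t) (P t.+1) j j'.
  move=> t tN; rewrite !PS // ?(ltnW tN) //.
  have -> : (i0 + (t.+1)%:Z = i0 + t%:Z + 1)%R by rewrite -GRing.addrA -PoszD addn1.
  exact: stepS.
have finalP : forall x, P 'C(30, 2) x = P 0 (rev_ord x).
  by move=> x; rewrite P0 PS // revS.
pose hh := h P.
have m10 : (30 %/ 3 = 10) by [].
have memA : forall x, (x \in A) = (hh x < 10).
  move=> x; rewrite EA; apply/imsetP/idP.
    move=> [i _ ->]; have iv : (nat_of_ord i < 10) := ltn_ord i.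
    have lt : (30 %/ 3 - 1 - i < 30) by lia.
    have [E _] := Hpos i (Ordinal lt); rewrite -E // /hh hP0 /=; lia.
  move=> hx.
  have lt : (9 - hh x < 30 %/ 3) by lia.
  exists (Ordinal lt) => //.
  have [E _] := Hpos (Ordinal lt) (pos P 0 x).
  rewrite -E ?Kpos //=; rewrite /hh /h in hx *; lia.
have memB : forall x, (x \in B) = (10 <= hh x < 20).
  move=> x; rewrite EB; apply/imsetP/idP.
    move=> [i _ ->]; have iv : (nat_of_ord i < 10) := ltn_ord i.
    have lt : (30 %/ 3 + i < 30) by lia.
    have [_ [E _]] := Hpos i (Ordinal lt); rewrite -E // /hh hP0 /=; lia.
  move=> hx.
  have lt : (hh x - 10 < 30 %/ 3) by lia.
  exists (Ordinal lt) => //.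
  have [_ [E _]] := Hpos (Ordinal lt) (pos P 0 x).
  rewrite -E ?Kpos //=; rewrite /hh /h in hx *; lia.
have memC : forall x, (x \in C) = (20 <= hh x).
  move=> x; rewrite EC; apply/imsetP/idP.
    move=> [i _ ->]; have iv : (nat_of_ord i < 10) := ltn_ord i.
    have lt : (2 * (30 %/ 3) + i < 30) by lia.
    have [_ [_ E]] := Hpos i (Ordinal lt); rewrite -E // /hh hP0 /=; lia.
  move=> hx.
  have lt : (hh x - 20 < 30 %/ 3) by have := h_lt P x; rewrite /hh in hx *; lia.
  exists (Ordinal lt) => //.
  have [_ [_ E]] := Hpos (Ordinal lt) (pos P 0 x).
  rewrite -E ?Kpos //=; rewrite /hh /h in hx *; lia.
have ordAB : forall t1 t2 x y u v, (t1 < 'C(30, 2)) -> (t2 < 'C(30, 2)) ->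
  swaps P t1 x y -> (hh x < 10) -> (10 <= hh y < 20) ->
  swaps P t2 u v -> (20 <= hh u) -> (hh v < 20) -> (t1 < t2).
  move=> t1 t2 x y u v ? ? ? ? ? ? ? hv; apply: (H1 t1 t2 x y u v) => //;
    rewrite ?memA ?memB ?memC // inE memA memB; lia.
have ordAC : forall t1 t2 x y u v, (t1 < 'C(30, 2)) -> (t2 < 'C(30, 2)) ->
  swaps P t1 x y -> (hh x < 10) -> (20 <= hh y) ->
  swaps P t2 u v -> (10 <= hh u < 20) -> (20 <= hh v) -> (t1 < t2).
  move=> t1 t2 x y u v ? ? ? ? ? ? ? ?; apply: (H2 t1 t2 x y u v) => //;
    rewrite ?memA ?memB ?memC //.
have SC : forall x y, same_class A B C x y = sc P x y.
  by move=> x y; rewrite /same_class /sc !memA !memB !memC.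
rewrite -(main_count stepP finalP ordAB ordAC hk).
apply: eq_count => t; rewrite /bich.
apply: eq_existsb => j; apply: eq_existsb => j'; apply: eq_existsb => x; apply: eq_existsb => y.
by rewrite SC.
Qed.
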